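(* Let $\{\mathbb{G}_n,\ n=2,3,\ldots\}$ be a sequence of random graphs as described in the context, with $\lim_{n\to\infty}|V_n|=\infty$, satisfying: (A) for each $n$, $D_{n,k}$ has the same distribution as $D_{n,1}$ for all $k\in V_n$, and for all distinct $k,\ell\in V_n$, $(D_{n,k},D_{n,\ell})$ has the same joint distribution as $(D_{n,1},D_{n,2})$; (B) there is an $\mathbb{N}$-valued random variable $D$ with pmf $p=(p(d),\ d=0,1,\ldots)$ such that $D_{n,1}\to D$ in distribution; (C) for each $d=0,1,\ldots$, $\lim_{n\to\infty}\mathrm{Cov}\big[\mathbf{1}[D_{n,1}=d],\mathbf{1}[D_{n,2}=d]\big]=0$. Then $d_{\mathrm{TV}}(P_n,p)\to 0$ in probability as $n\to\infty$.
   Context: All random variables are defined on a common probability space $(\Omega,\mathcal{F},\mathbb{P})$. For each $n=2,3,\ldots$, $\mathbb{G}_n$ is a random (possibly directed, self-loops allowed) graph on the deterministic finite node set $V_n=\{1,\ldots,k_n\}$ with $k_n\ge 2$, determined by $\{0,1\}$-valued edge random variables $\{\chi_n(k,\ell),\ k,\ell\in V_n\}$. The degree of node $k$ is $D_{n,k}=\sum_{\ell\in V_n}\chi_n(k,\ell)$. For $d=0,1,\ldots$, $P_n(d)=\frac{1}{|V_n|}\sum_{k\in V_n}\mathbf{1}[D_{n,k}=d]$, and $P_n=(P_n(d),\ d=0,1,\ldots)$ is the (random) empirical degree pmf on $\mathbb{N}=\{0,1,\ldots\}$. For pmfs $\mu,\nu$ on $\mathbb{N}$, $d_{\mathrm{TV}}(\mu,\nu)=\frac12\sum_{x=0}^\infty|\mu(x)-\nu(x)|$.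 *)

(* Defs.v *)
From HB Require Import structures.
From mathcomp Require Import all_boot all_order all_algebra.
From mathcomp Require Import all_classical all_reals all_analysis.
Set Implicit Arguments. Unset Strict Implicit. Unset Printing Implicit Defensive.
Import Order.TTheory GRing.Theory Num.Theory.
Import numFieldNormedType.Exports.
Local Open Scope classical_set_scope.
Local Open Scope ring_scope.

Section defs.
Context {dT : measure_display} {T : measurableType dT} {R : realType}.
Variable P : probability T R.

(* Degree of node i (nodes are 0, ..., kn - 1) of a random graph with
   edge indicators chi : nat -> nat -> T -> bool and kn nodes. *)
Definition degree (kn : nat) (chi : nat -> nat -> T -> bool) (i : nat) (w : T) : nat :=
  \sum_(l < kn) (chi i l w : nat).

Definition emp_degree_pmf (kn : nat) (chi : nat -> nat -> T -> bool) (w : T) (d : nat) : R :=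
  (kn%:R)^-1 * (#|[set i : 'I_kn | degree kn chi i w == d]|)%:R.

Definition dTV (mu nu : nat -> R) : \bar R :=
  ((2%:R)^-1)%:E * (\sum_(0 <= x <oo) (`|mu x - nu x|)%:E)%E.

Definition same_distr (X Y : T -> nat) : Prop :=
  forall A : set nat, P (X @^-1` A) = P (Y @^-1` A).

Definition same_joint_distr (X1 X2 Y1 Y2 : T -> nat) : Prop :=
  forall A : set (nat * nat),
    P ((fun w => (X1 w, X2 w)) @^-1` A) = P ((fun w => (Y1 w, Y2 w)) @^-1` A).

Definition nat_cdf (X : T -> nat) (x : R) : R := fine (P [set w | (X w)%:R <= x]).

Definition conv_in_distr (X : nat -> T -> nat) (Y : T -> nat) : Prop :=
  forall x : R, {for x, continuous (nat_cdf Y)} ->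
    (fun n => nat_cdf (X n) x) @ \oo --> nat_cdf Y x.

Definition nat_pmf (X : T -> nat) (d : nat) : R := fine (P [set w | X w = d]).

End defs.

(* Main.v *)
Require Import Defs.
From HB Require Import structures.
From mathcomp Require Import all_boot all_order all_algebra.
From mathcomp Require Import all_classical all_reals all_analysis.
From mathcomp Require Import ring lra zify.
Set Implicit Arguments. Unset Strict Implicit. Unset Printing Implicit Defensive.
Import Order.TTheory GRing.Theory Num.Theory.
Import numFieldNormedType.Exports.
Local Open Scope classical_set_scope.
Local Open Scope ring_scope.


Section alg.
Context {R : realType}.

Lemma second_moment (F : finType) (m : F -> R) (K : nat) (A : 'I_K -> pred F) (q r : R) :
  (0 < K)%N -> \sum_v m v = 1 ->
  (forall i, \sum_(v | A i v) m v = q) ->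
  (forall i j, i != j -> \sum_(v | A i v && A j v) m v = r) ->
  \sum_v ((K%:R^-1 * (#|[set i | A i v]|)%:R - q)^+2 * m v)
    = K%:R^-1 * q + (1 - K%:R^-1) * r - q^+2.
Proof.
move=> K0 sum1 Aq Ar.
set N := fun v => (#|[set i | A i v]|)%:R : R.
have hN : forall v, N v = \sum_i (A i v)%:R.
  move=> v; rewrite /N -sum1_card natr_sum [LHS]big_mkcond /=.
  apply: eq_bigr => i _; case h: (A i v).
    by rewrite mem_set.
  by rewrite memNset //= h.
have s1 : \sum_v N v * m v = K%:R * q.
  rewrite (eq_bigr (fun v => \sum_i (A i v)%:R * m v)); last first.
    by move=> v _; rewrite hN mulr_suml.
  rewrite exchange_big /=.
  transitivity (\sum_(i < K) q); last by rewrite sumr_const card_ord mulr_natl.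
  apply: eq_bigr => i _; rewrite -(Aq i) [RHS]big_mkcond; apply: eq_bigr => v _.
  by case: (A i v); rewrite ?mul1r ?mul0r.
have s2 : \sum_v N v ^+ 2 * m v = K%:R * q + K%:R * (K%:R - 1) * r.
  transitivity (\sum_v \sum_i \sum_j ((A i v && A j v)%:R * m v)).
    apply: eq_bigr => v _; rewrite hN expr2 mulr_suml mulr_suml.
    apply: eq_bigr => i _; rewrite mulr_sumr mulr_suml; apply: eq_bigr => j _.
    by case: (A i v); case: (A j v); rewrite /= ?mul1r ?mul0r.
  rewrite exchange_big /=; under eq_bigr do rewrite exchange_big /=.
  transitivity (\sum_(i < K) (q + (K%:R - 1) * r)); last first.
    by rewrite sumr_const card_ord -mulr_natl; ring.
  apply: eq_bigr => i _; rewrite (bigD1 i) //=; congr (_ + _).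
    rewrite -(Aq i) [RHS]big_mkcond; apply: eq_bigr => v _.
    by rewrite andbb; case: (A i v); rewrite ?mul1r ?mul0r.
  transitivity (\sum_(j | j != i) r).
    apply: eq_bigr => j ji; rewrite -(Ar i j); last by rewrite eq_sym.
    rewrite [RHS]big_mkcond; apply: eq_bigr => v _.
    by case: (A i v && A j v); rewrite ?mul1r ?mul0r.
  have hK : (K%:R : R) = (K.-1)%:R + 1 by rewrite natr1 prednK.
  by rewrite sumr_const cardC1 card_ord hK -mulr_natl; ring.
transitivity (\sum_v (K%:R^-1^+2 * (N v ^+2 * m v) + (- 2 * q * K%:R^-1) * (N v * m v)
   + q^+2 * m v)).
  by apply: eq_bigr => v _; rewrite /N; ring.
rewrite !big_split /= -!mulr_sumr s1 s2 sum1.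
have KN0 : K%:R != 0 :> R by rewrite pnatr_eq0 -lt0n.
by field.
Qed.

Lemma markov_fin (F : finType) (m : F -> R) (f : F -> R) (d : R) : 0 < d ->
  (forall v, 0 <= m v) ->
  \sum_(v | d <= `|f v|) m v <= d^-2 * \sum_v (f v ^+2 * m v).
Proof.
move=> d0 m0; rewrite big_mkcond mulr_sumr; apply: ler_sum => v _.
case: ifP => h; last first.
  by apply: mulr_ge0; [rewrite invr_ge0; apply: exprn_ge0; apply: ltW | apply: mulr_ge0; [apply: sqr_ge0 | apply: m0]].
have h2 : d ^+ 2 <= f v ^+ 2.
  have e := real_normK (num_real (f v)); move: h => /= h; rewrite -e; nra.
have h3 : d^-2 * d^+2 = 1 by rewrite mulVf // expf_neq0 // gt_eqF.
have h1 : 0 <= d^-2 * (f v ^+2 - d^+2).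
  apply: mulr_ge0; first by rewrite invr_ge0; apply: exprn_ge0; apply: ltW.
  by rewrite subr_ge0.
rewrite -subr_ge0.
have -> : d^-2 * (f v ^+ 2 * m v) - m v = (d^-2 * (f v ^+2 - d^+2)) * m v.
  by rewrite [in RHS]mulrBr h3 mulrBl mul1r mulrA.
exact: mulr_ge0.
Qed.

Lemma union_bound (F : finType) (m : F -> R) (M : nat) (B : 'I_M -> pred F) :
  (forall v, 0 <= m v) ->
  \sum_(v | [exists x, B x v]) m v <= \sum_(x < M) \sum_(v | B x v) m v.
Proof.
move=> m0; rewrite [in X in _ <= X](exchange_big_dep xpredT) //=.
rewrite big_mkcond /=; apply: ler_sum => v _.
case: existsP => [[x Bx]|_]; last by rewrite sumr_ge0.
by rewrite (bigD1 x) //= lerDl sumr_ge0.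
Qed.

Lemma sub_sum (F : finType) (m : F -> R) (S S' : pred F) :
  (forall v, 0 <= m v) -> (forall v, S v -> S' v) ->
  \sum_(v | S v) m v <= \sum_(v | S' v) m v.
Proof.
move=> m0 SS; rewrite [X in X <= _]big_mkcond [X in _ <= X]big_mkcond.
apply: ler_sum => v _; case: ifP => h; first by rewrite SS.
by case: ifP.
Qed.


Lemma dTV_bound (a b : nat -> R) (M : nat) :
  (forall x, 0 <= a x) -> (forall x, 0 <= b x) ->
  (forall N, \sum_(0 <= x < N) a x <= 1) -> (forall N, \sum_(0 <= x < N) b x <= 1) ->
  (dTV a b <= (\sum_(0 <= x < M) `|a x - b x| + (1 - \sum_(0 <= x < M) b x))%:E)%E.
Proof.
move=> a0 b0 a1 b1.
set B := \sum_(0 <= x < M) `|a x - b x| + (1 - \sum_(0 <= x < M) b x).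
have part : forall N, \sum_(0 <= x < N) `|a x - b x| <= 2 * B.
  move=> N.
  have -> : \sum_(0 <= x < N) `|a x - b x| =
            \sum_(0 <= x < N + M) `|a x - b x| - \sum_(N <= x < N + M) `|a x - b x|.
    by rewrite (big_cat_nat (leq0n N) (leq_addr M N)) /= addrK.
  have h0 : 0 <= \sum_(N <= x < N + M) `|a x - b x| by apply: sumr_ge0.
  rewrite (big_cat_nat (leq0n M) (leq_addl N M)) /=.
  have ha := a1 (N + M); have hb := b1 (N + M).
  rewrite (big_cat_nat (leq0n M) (leq_addl N M)) /= in ha.
  rewrite (big_cat_nat (leq0n M) (leq_addl N M)) /= in hb.
  have t : \sum_(M <= x < N + M) `|a x - b x| <=
           \sum_(M <= x < N + M) a x + \sum_(M <= x < N + M) b x.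
    rewrite -big_split /=; apply: ler_sum => x _.
    by rewrite (le_trans (ler_normB _ _)) // !ger0_norm.
  have u : \sum_(0 <= x < M) b x - \sum_(0 <= x < M) a x <=
           \sum_(0 <= x < M) `|a x - b x|.
    rewrite -sumrB; apply: ler_sum => x _.
    by rewrite distrC ler_norm.
  rewrite /B; lra.
have S2 : (\sum_(0 <= x <oo) (`|a x - b x|)%:E <= (2 * B)%:E)%E.
  apply: lime_le; first by apply: is_cvg_nneseries => n _ _; rewrite lee_fin.
  by apply: nearW => N; rewrite sumEFin lee_fin part.
rewrite /dTV.
have -> : B = 2^-1 * (2 * B) by rewrite mulrA mulVf ?mul1r // pnatr_eq0.
rewrite EFinM; apply: lee_wpmul2l => //.
Qed.


Lemma sum_eq_lt (c N : nat) : \sum_(0 <= x < N) ((c == x)%:R : R) = ((c < N)%N)%:R.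
Proof.
elim: N => [|N IH]; first by rewrite big_geq.
rewrite big_nat_recr //= IH.
have [h|h|->] := ltngtP c N.
- by rewrite (_ : (c < N.+1)%N = true) ?addr0 //; lia.
- by rewrite (_ : (c < N.+1)%N = false) ?addr0 //; lia.
- by rewrite ltnSn add0r.
Qed.

Lemma count_sum_le1 (K : nat) (deg : 'I_K -> nat) N : (0 < K)%N ->
  \sum_(0 <= x < N) (K%:R^-1 * (#|[set i | deg i == x]|)%:R) <= 1 :> R.
Proof.
move=> K0; rewrite -mulr_sumr.
have hc : forall x, ((#|[set i | deg i == x]|)%:R : R) = \sum_i ((deg i == x)%:R).
  move=> x; rewrite -sum1_card natr_sum [LHS]big_mkcond /=.
  apply: eq_bigr => i _; case h: (deg i == x).
    by rewrite mem_set.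
  by rewrite memNset //= h.
under eq_bigr do rewrite hc.
rewrite exchange_big /=.
have : \sum_(i < K) \sum_(0 <= x < N) ((deg i == x)%:R : R) <= K%:R.
  have -> : (K%:R : R) = \sum_(i < K) (1 : R) by rewrite sumr_const card_ord.
  apply: ler_sum => i _; rewrite sum_eq_lt.
  by case: (deg i < N)%N.
have Kp : (0 : R) < K%:R by rewrite ltr0n.
move=> h; apply: (le_trans (ler_wpM2l _ h)); first by rewrite invr_ge0 ltW.
by rewrite mulVf // lt0r_neq0.
Qed.

Lemma inv_cvg0 (k : nat -> nat) :
  (forall n, (0 < k n)%N) ->
  (forall M : nat, exists N : nat, forall n, (N <= n)%N -> (M <= k n)%N) ->
  (fun n => (k n)%:R^-1 : R) @ \oo --> 0.
Proof.
move=> k0 hk; apply/cvgrPdist_lt => e e0.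
have [N HN] := hk (Num.Def.truncn e^-1).+1.
exists N => // n /= Nn.
rewrite sub0r normrN ger0_norm ?invr_ge0 //.
have := HN n Nn; rewrite -(ler_nat R) => h.
have h2 := truncnS_gt (e^-1).
have kp : (0 : R) < (k n)%:R by rewrite ltr0n.
rewrite invf_plt ?posrE //.
exact: lt_le_trans h2 h.
Qed.

Lemma sum_cvg0 (M : nat) (u : 'I_M -> nat -> R) :
  (forall x, u x @ \oo --> 0) -> (fun n => \sum_(x < M) u x n) @ \oo --> 0.
Proof.
elim: M u => [|M IH] u H.
  under eq_fun do rewrite big_ord0.
  exact: cvg_cst.
under eq_fun do rewrite big_ord_recr /=.
have h := cvgD (IH (fun x => u (widen_ord (leqnSn M) x)) (fun x => H _)) (H ord_max).
by rewrite addr0 in h; exact: h.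
Qed.

End alg.

Section fibers.
Context {dT : measure_display} {T : measurableType dT} {R : realType}.
Variable P : probability T R.

Lemma fiber_list (F : eqType) (W : T -> F) :
  (forall v, measurable [set w | W w = v]) ->
  forall s : seq F, uniq s ->
  measurable [set w | W w \in s] /\
  P [set w | W w \in s] = (\sum_(v <- s) fine (P [set w | W w = v]))%:E.
Proof.
move=> mW; elim=> [|x s IH] /=.
  move=> _; rewrite big_nil.
  have -> : [set w | W w \in [::]] = set0 by apply/seteqP; split => w //=.
  by rewrite measure0.
move=> /andP[xs us]; have [ms Ps] := IH us.
have -> : [set w | W w \in x :: s] = [set w | W w = x] `|` [set w | W w \in s].
  apply/seteqP; split => w /=; rewrite inE.
    by case/orP => [/eqP|] H; [left|right].
  by case=> [->|->]; rewrite ?eqxx ?orbT.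
split; first exact: measurableU.
rewrite measureU //; last first.
  apply/seteqP; split => w //= [-> H]; by rewrite H in xs.
rewrite big_cons EFinD fineK; last exact: fin_num_measure.
congr (_ + _); exact: Ps.
Qed.


Section vec.
Variables (K : nat) (c : nat -> nat -> T -> bool).
Hypothesis mc : forall i l, measurable [set w | c i l w].

Definition Wv (w : T) : {ffun 'I_K * 'I_K -> bool} := [ffun p : 'I_K * 'I_K => c p.1 p.2 w].

Lemma Wv_meas v : measurable [set w | Wv w = v].
Proof.
have -> : [set w | Wv w = v] =
    \bigcap_(p in [set: 'I_K * 'I_K]) [set w | c p.1 p.2 w = v p].
  apply/seteqP; split => w /=.
    by move=> <- p _; rewrite ffunE.
  by move=> H; apply/ffunP => p; rewrite ffunE; exact: H.
apply: fin_bigcap_measurable; first exact: finite_finset.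
move=> p _; case: (v p); first exact: mc.
have -> : [set w | c p.1 p.2 w = false] = ~` [set w | c p.1 p.2 w].
  by apply/seteqP; split => w /=; case: (c p.1 p.2 w).
exact/measurableC/mc.
Qed.

Definition mu v := fine (P [set w | Wv w = v]).

Lemma PWm (S : pred {ffun 'I_K * 'I_K -> bool}) :
  measurable [set w | S (Wv w)].
Proof.
have [m E] := fiber_list Wv_meas (enum_uniq S).
have e : [set w | Wv w \in enum S] = [set w | S (Wv w)].
  by apply/seteqP; split => w /=; rewrite mem_enum.
by rewrite -e.
Qed.

Lemma PW (S : pred {ffun 'I_K * 'I_K -> bool}) :
  P [set w | S (Wv w)] = (\sum_(v | S v) mu v)%:E.
Proof.
have [m E] := fiber_list Wv_meas (enum_uniq S).
have e : [set w | Wv w \in enum S] = [set w | S (Wv w)].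
  by apply/seteqP; split => w /=; rewrite mem_enum.
rewrite -e E; congr (_%:E).
rewrite big_enum_cond /=; by apply: eq_bigl => v; rewrite andbT.
Qed.

Lemma mu_ge0 v : 0 <= mu v.
Proof. exact/fine_ge0/measure_ge0. Qed.

Lemma mu_sum1 : \sum_v mu v = 1.
Proof.
have := PW xpredT.
rewrite (_ : [set w | xpredT (Wv w)] = setT); last by apply/seteqP; split.
by rewrite probability_setT => -[<-].
Qed.

Definition degv (v : {ffun 'I_K * 'I_K -> bool}) (i : 'I_K) : nat :=
  \sum_(l < K) (v (i, l) : nat).

Lemma degree_W (i : 'I_K) w : degree K c i w = degv (Wv w) i.
Proof. by rewrite /degree /degv; apply: eq_bigr => l _; rewrite ffunE. Qed.

Lemma deg_set (i : 'I_K) d :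
  [set w | degree K c i w = d] = [set w | (fun v => degv v i == d) (Wv w)].
Proof.
by apply/seteqP; split => w /=; rewrite degree_W => /eqP.
Qed.

Lemma deg_set2 (i j : 'I_K) d :
  [set w | degree K c i w = d] `&` [set w | degree K c j w = d] =
  [set w | (fun v => (degv v i == d) && (degv v j == d)) (Wv w)].
Proof.
apply/seteqP; split => w /=; rewrite !degree_W.
  by case=> -> ->; rewrite !eqxx.
by case/andP => /eqP -> /eqP ->.
Qed.

Lemma emp_W w d : emp_degree_pmf (R:=R) K c w d =
  K%:R^-1 * (#|[set i : 'I_K | degv (Wv w) i == d]|)%:R.
Proof.
rewrite /emp_degree_pmf; congr (_ * (#|_|)%:R).
by apply/seteqP; split => i /=; rewrite degree_W.
Qed.

Lemma PdegE (i : 'I_K) d :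
  fine (P ((degree K c i) @^-1` [set d])) = \sum_(v | degv v i == d) mu v.
Proof.
have -> : degree K c i @^-1` [set d] = [set w | (fun v => degv v i == d) (Wv w)].
  by apply/seteqP; split => w /=; rewrite degree_W => /eqP.
by rewrite (PW (fun v => degv v i == d)).
Qed.

Lemma Pdeg2E (i j : 'I_K) d :
  fine (P ((fun w => (degree K c i w, degree K c j w)) @^-1` [set (d, d)])) =
  \sum_(v | (degv v i == d) && (degv v j == d)) mu v.
Proof.
have -> : (fun w => (degree K c i w, degree K c j w)) @^-1` [set (d, d)] =
   [set w | (fun v => (degv v i == d) && (degv v j == d)) (Wv w)].
  apply/seteqP; split => w /=; rewrite !degree_W.
    by case=> -> ->; rewrite !eqxx.
  by case/andP => /eqP -> /eqP ->.
by rewrite (PW (fun v => (degv v i == d) && (degv v j == d))).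
Qed.

End vec.

Section natrv.
Variable X : T -> nat.
Hypothesis mX : forall d, measurable [set w | X w = d].

Lemma Plt_meas m : measurable [set w | (X w < m)%N].
Proof.
have [mm _] := fiber_list mX (iota_uniq 0 (m - 0)).
have -> : [set w | (X w < m)%N] = [set w | X w \in index_iota 0 m].
  by apply/seteqP; split => w /=; rewrite mem_index_iota.
exact: mm.
Qed.

Lemma Plt m : P [set w | (X w < m)%N] = (\sum_(0 <= x < m) nat_pmf P X x)%:E.
Proof.
have [_ E] := fiber_list mX (iota_uniq 0 (m - 0)).
have -> : [set w | (X w < m)%N] = [set w | X w \in index_iota 0 m].
  by apply/seteqP; split => w /=; rewrite mem_index_iota.
exact: E.
Qed.

Lemma natpmf_ge0 d : 0 <= nat_pmf P X d.
Proof. exact/fine_ge0/measure_ge0. Qed.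

Lemma pmf_sum_le1 m : \sum_(0 <= x < m) nat_pmf P X x <= 1.
Proof.
have := probability_le1 P (Plt_meas m).
by rewrite Plt lee_fin.
Qed.

End natrv.

Lemma cdf_set (X : T -> nat) (d : nat) (z : R) : d%:R - 1 < z -> z < d%:R ->
  [set w | (X w)%:R <= z] = [set w | (X w < d)%N].
Proof.
move=> h1 h2; apply/seteqP; split => w /=.
  move=> h; rewrite ltnNge; apply/negP => hd.
  have : (d%:R : R) <= (X w)%:R by rewrite ler_nat.
  lra.
move=> h; have : ((X w).+1%:R : R) <= d%:R by rewrite ler_nat.
rewrite -natr1 => ?; lra.
Qed.

Lemma cdf_val (X : T -> nat) (d : nat) (z : R) : d%:R - 1 < z -> z < d%:R ->
  nat_cdf P X z = fine (P [set w | (X w < d)%N]).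
Proof. by move=> h1 h2; rewrite /nat_cdf (cdf_set X h1 h2). Qed.

Lemma cdf_cont (X : T -> nat) (d : nat) :
  {for (d%:R - 2^-1), continuous (nat_cdf P X)}.
Proof.
apply: cvg_near_cst.
have hin : d%:R - 2^-1 \in `](d%:R - 1 : R), d%:R[.
  rewrite in_itv /=; apply/andP; split; lra.
apply: filterS (near_in_itvoo hin) => z; rewrite in_itv /= => /andP[z1 z2].
rewrite (cdf_val X z1 z2) (@cdf_val X d (d%:R - 2^-1)) //; lra.
Qed.

Lemma pmf_diff (X : T -> nat) (mX : forall d, measurable [set w | X w = d]) d :
  nat_pmf P X d = nat_cdf P X (d.+1%:R - 2^-1) - nat_cdf P X (d%:R - 2^-1).
Proof.
rewrite (@cdf_val X d.+1 (d.+1%:R - 2^-1)); [|rewrite -natr1; lra|lra].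
rewrite (@cdf_val X d (d%:R - 2^-1)); [|lra|lra].
rewrite !Plt //= big_nat_recr //=; lra.
Qed.

Lemma pmf_conv (X : nat -> T -> nat) (Y : T -> nat) :
  (forall n d, measurable [set w | X n w = d]) ->
  (forall d, measurable [set w | Y w = d]) ->
  conv_in_distr P X Y ->
  forall d, (fun n => nat_pmf P (X n) d) @ \oo --> nat_pmf P Y d.
Proof.
move=> mX mY H d.
rewrite pmf_diff //.
have -> : (fun n => nat_pmf P (X n) d) =
   (fun n => nat_cdf P (X n) (d.+1%:R - 2^-1) - nat_cdf P (X n) (d%:R - 2^-1)).
  by apply/funext => n; rewrite pmf_diff.
by apply: cvgB; apply: H; apply: cdf_cont.
Qed.


Lemma Lfun_indic (A : set T) : measurable A -> (\1_A : T -> R) \in Lfun P 1.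
Proof. by move=> mA; apply/Lfun1_integrable; exact: integrable_indic. Qed.

Lemma cov_indic (A B : set T) : measurable A -> measurable B ->
  covariance P (\1_A : T -> R) (\1_B : T -> R) = (P (A `&` B) - P A * P B)%E.
Proof.
move=> mA mB.
have e : ((\1_A : T -> R) * \1_B)%R = \1_(A `&` B).
  by rewrite indicI.
rewrite covarianceE ?Lfun_indic // ?e ?Lfun_indic //; last exact: measurableI.
by rewrite !expectation_indic //; exact: measurableI.
Qed.

End fibers.

Definition gfun {R : realType} (K : nat) (v : {ffun 'I_K * 'I_K -> bool}) (x : nat) : R :=
  K%:R^-1 * (#|[set i | degv v i == x]|)%:R.


Theorem proposition5 (dT : measure_display) (T : measurableType dT) (R : realType)
    (P : probability T R)
    (k : nat -> nat) (chi : nat -> nat -> nat -> T -> bool) (D : T -> nat) :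
  (forall n, (2 <= k n)%N) ->
  (forall n i l, measurable [set w | chi n i l w]) ->
  measurable_fun setT D ->
  (forall M : nat, exists N : nat, forall n, (N <= n)%N -> (M <= k n)%N) ->
  (* (A) *)
  (forall n i, (i < k n)%N ->
     same_distr P (degree (k n) (chi n) i) (degree (k n) (chi n) 0)) ->
  (forall n i j, (i < k n)%N -> (j < k n)%N -> i <> j ->
     same_joint_distr P (degree (k n) (chi n) i) (degree (k n) (chi n) j)
                        (degree (k n) (chi n) 0) (degree (k n) (chi n) 1)) ->
  (* (B) *)
  conv_in_distr P (fun n => degree (k n) (chi n) 0) D ->
  (* (C) *)
  (forall d : nat,
     (fun n => covariance P
        (\1_[set w | degree (k n) (chi n) 0 w = d] : T -> R)
        (\1_[set w | degree (k n) (chi n) 1 w = d] : T -> R)) @ \oo --> 0%E) ->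
  (* conclusion: d_TV(P_n, p) -> 0 in probability *)
  forall eps : R, 0 < eps ->
    (fun n => P [set w | (eps%:E < dTV (emp_degree_pmf (k n) (chi n) w) (nat_pmf P D))%E])
      @ \oo --> 0%E.
Proof.
move=> k2 mchi mD kinf symA symB convB covC eps eps0.
set p := nat_pmf P D.
have mDd : forall d, measurable [set w | D w = d].
  by move=> d; have := mD measurableT [set d]; rewrite setTI; apply.
have k0 : forall n, (0 < k n)%N by move=> n; exact: leq_trans (k2 n).
have mdeg : forall n d, measurable [set w | degree (k n) (chi n) 0 w = d].
  move=> n d; have := PWm P (mchi n) (fun v => degv v (Ordinal (k0 n)) == d).
  by rewrite -(deg_set (chi n) (Ordinal (k0 n)) d).
have mdeg1 : forall n d, measurable [set w | degree (k n) (chi n) 1 w = d].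
  move=> n d; have := PWm P (mchi n) (fun v => degv v (Ordinal (k2 n)) == d).
  by rewrite -(deg_set (chi n) (Ordinal (k2 n)) d).
have p0 : forall x, 0 <= p x := natpmf_ge0 P D.
have p1 : forall N, \sum_(0 <= x < N) p x <= 1 := pmf_sum_le1 P mDd.
have tail : (fun M => \sum_(0 <= x < M) p x) @ \oo --> (1 : R).
  have eU : \bigcup_n [set w | (D w < n)%N] = setT.
    by apply/seteqP; split => w // _; exists (D w).+1 => //=.
  have nd : nondecreasing_seq (fun M => [set w | (D w < M)%N]).
    by move=> a b ab; apply/subsetPset => w /= h; exact: leq_trans h ab.
  have mU : measurable (\bigcup_n [set w | (D w < n)%N]) by rewrite eU.
  have := @nondecreasing_cvg_mu _ _ R P _ (Plt_meas P mDd) mU nd.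
  rewrite eU => h. have h1 : (P \o (fun M => [set w | (D w < M)%N])) @ \oo --> P setT by exact: h. rewrite probability_setT in h1.
  have h2 := fine_cvg h1.
  have e : fine \o (P \o (fun M => [set w | (D w < M)%N])) = (fun M => \sum_(0 <= x < M) p x).
    by apply: funext => M /=; rewrite (Plt P mDd).
  by rewrite -e; exact: h2.
have [M HM] : exists M, 1 - \sum_(0 <= x < M) p x < eps / 2.
  have e2 : 0 < eps / 2 by lra.
  have [N _ HN] := @cvgr_dist_lt _ _ _ _ _ _ _ tail _ e2.
  exists N; have := HN N (leqnn N); rewrite /=.
  move=> h; apply: le_lt_trans h; exact: ler_norm.
pose d := eps / (2 * M.+1%:R).
have hM1 : (0 : R) < M.+1%:R by rewrite ltr0n.
have d0 : 0 < d by rewrite /d divr_gt0 // mulr_gt0.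
have Md : M%:R * d <= eps / 2.
  have e : M%:R * d = (M%:R / M.+1%:R) * (eps / 2).
    by rewrite /d; field; rewrite lt0r_neq0.
  rewrite e ler_piMl ?divr_ge0 ?ltW //.
  by rewrite ltr_pdivrMr // mul1r ltr_nat.
pose b := fun n x => \sum_(v : {ffun 'I_(k n) * 'I_(k n) -> bool} | d <= `|gfun v x - p x|) mu P (chi n) v.
have bad_eq : forall n,
    P [set w | (eps%:E < dTV (emp_degree_pmf (k n) (chi n) w) p)%E] =
    (\sum_(v : {ffun 'I_(k n) * 'I_(k n) -> bool} | (eps%:E < dTV (gfun v) p)%E) mu P (chi n) v)%:E.
  move=> n.
  transitivity (P [set w | (fun v : {ffun 'I_(k n) * 'I_(k n) -> bool} => (eps%:E < dTV (gfun v) p)%E) (Wv (k n) (chi n) w)]);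
    last exact: (PW P (mchi n)).
  have ew : forall w, emp_degree_pmf (R:=R) (k n) (chi n) w = gfun (Wv (k n) (chi n) w).
    by move=> w; apply: funext => x; exact: emp_W.
  by congr (P _); apply/seteqP; split => w /=; rewrite ew.
have bad_le : forall n,
    \sum_(v : {ffun 'I_(k n) * 'I_(k n) -> bool} | (eps%:E < dTV (gfun v) p)%E) mu P (chi n) v <= \sum_(x < M) b n x.
  move=> n.
  apply: le_trans (union_bound (fun (x : 'I_M) (v : {ffun 'I_(k n) * 'I_(k n) -> bool}) => d <= `|gfun v x - p x|) (mu_ge0 P (chi n))).
  apply: sub_sum => [v|v]; first exact: mu_ge0.
  apply: contraLR => /existsPn hv.
  rewrite -leNgt.
  have g0 : forall x, 0 <= gfun v x :> R.
    by move=> x; rewrite /gfun mulr_ge0 // invr_ge0 ler0n.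
  have g1 : forall N, \sum_(0 <= x < N) gfun v x <= 1 :> R.
    by move=> N; exact: (count_sum_le1 (fun i => degv v i) N (k0 n)).
  apply: le_trans (dTV_bound M g0 p0 g1 p1) _.
  rewrite lee_fin.
  have hs : \sum_(0 <= x < M) `|gfun v x - p x| <= M%:R * d.
    rewrite big_mkord; apply: le_trans (_ : \sum_(x < M) d <= _).
      apply: ler_sum => x _; have := hv x; rewrite -ltNge => /ltW; exact.
    by rewrite sumr_const card_ord mulr_natl.
  lra.
have bcv : forall x : nat, (fun n => b n x) @ \oo --> 0.
  move=> x.
  pose q := fun n => nat_pmf P (degree (k n) (chi n) 0) x.
  pose r := fun n => fine (P ((fun w => (degree (k n) (chi n) 0 w, degree (k n) (chi n) 1 w))
                               @^-1` [set (x, x)])).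
  have hq : forall n (i : 'I_(k n)), \sum_(v | degv v i == x) mu P (chi n) v = q n.
    by move=> n i; rewrite -(PdegE P (mchi n) i x) (symA n i (ltn_ord i) [set x]).
  have hr : forall n (i j : 'I_(k n)), i != j ->
      \sum_(v | (degv v i == x) && (degv v j == x)) mu P (chi n) v = r n.
    move=> n i j ij.
    have ij' : (i : nat) <> j by move=> e; move/eqP: ij; apply; apply: val_inj.
    by rewrite -(Pdeg2E P (mchi n) i j x) (symB n i j (ltn_ord i) (ltn_ord j) ij' [set (x, x)]).
  have q1 : forall n, q n <= 1.
    move=> n; rewrite -(hq n (Ordinal (k0 n))) -(mu_sum1 P (k n) (mchi n)).
    by apply: sub_sum => // v; exact: mu_ge0.
  have r0 : forall n, 0 <= r n by move=> n; exact/fine_ge0/measure_ge0.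
  have mom : forall n, \sum_(v : {ffun 'I_(k n) * 'I_(k n) -> bool})
      ((gfun v x - q n) ^+ 2 * mu P (chi n) v) <= (k n)%:R^-1 + (r n - q n ^+ 2).
    move=> n.
    rewrite /gfun (second_moment (A := fun i v => degv v i == x) (k0 n)
                 (mu_sum1 P (k n) (mchi n)) (hq n) (hr n)).
    have t0 : 0 <= (k n)%:R^-1 :> R by rewrite invr_ge0 ler0n.
    have := q1 n; have := r0 n; move: t0.
    set t := (k n)%:R^-1; nra.
  have d2 : 0 < d / 2 by lra.
  have mark : forall n, `|p x - q n| < d / 2 ->
      b n x <= (d / 2)^-2 * ((k n)%:R^-1 + (r n - q n ^+ 2)).
    move=> n hn.
    have hm := markov_fin (fun v : {ffun 'I_(k n) * 'I_(k n) -> bool} => gfun v x - q n)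
                 d2 (mu_ge0 P (chi n)).
    apply: le_trans (_ : _ <= \sum_(v : {ffun 'I_(k n) * 'I_(k n) -> bool} |
        d / 2 <= `|gfun v x - q n|) mu P (chi n) v) _.
      apply: sub_sum => v; first exact: mu_ge0.
      move=> h.
      have t := ler_normD (gfun v x - q n) (q n - p x).
      rewrite (_ : gfun v x - q n + (q n - p x) = gfun v x - p x) in t; last first.
        by rewrite addrA subrK.
      rewrite distrC in hn.
      lra.
    apply: le_trans hm _.
    apply: ler_wpM2l; last exact: mom.
    by rewrite invr_ge0 exprn_ge0 // ltW.
  have qcv : q @ \oo --> p x := pmf_conv mdeg mDd convB (d := x).
  have kcv := @inv_cvg0 R k k0 kinf.
  have rcv : (fun n => r n - q n ^+ 2) @ \oo --> 0.
    have e : forall n, covariance P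
        (\1_[set w | degree (k n) (chi n) 0 w = x] : T -> R)
        (\1_[set w | degree (k n) (chi n) 1 w = x] : T -> R) = (r n - q n ^+ 2)%:E.
      move=> n; rewrite cov_indic ?mdeg ?mdeg1 //.
      have eI : [set w | degree (k n) (chi n) 0 w = x] `&` [set w | degree (k n) (chi n) 1 w = x]
          = (fun w => (degree (k n) (chi n) 0 w, degree (k n) (chi n) 1 w)) @^-1` [set (x, x)].
        by apply/seteqP; split => w /=; [case=> -> -> | case=> -> ->].
      have mI : measurable ((fun w => (degree (k n) (chi n) 0 w, degree (k n) (chi n) 1 w))
                  @^-1` [set (x, x)]) by rewrite -eI; apply: measurableI.
      have e1 : P [set w | degree (k n) (chi n) 1 w = x] = P [set w | degree (k n) (chi n) 0 w = x]
        := symA n 1 (k2 n) [set x].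
      have e0 : P [set w | degree (k n) (chi n) 0 w = x] = (q n)%:E.
        by rewrite /q /nat_pmf fineK // fin_num_measure.
      have er : P ((fun w => (degree (k n) (chi n) 0 w, degree (k n) (chi n) 1 w))
                  @^-1` [set (x, x)]) = (r n)%:E.
        by rewrite /r fineK // fin_num_measure.
      by rewrite eI e1 e0 er -EFinM -EFinB expr2.
    have h := covC x.
    have h' : (fun n => (r n - q n ^+ 2)%:E) @ \oo --> 0%E.
      rewrite (_ : (fun n => _) = (fun n => covariance P
        (\1_[set w | degree (k n) (chi n) 0 w = x] : T -> R)
        (\1_[set w | degree (k n) (chi n) 1 w = x] : T -> R))) //.
      by apply: funext => n; rewrite e.
    exact: fine_cvg h'.
  have bnd_cv : (fun n => (d / 2)^-2 * ((k n)%:R^-1 + (r n - q n ^+ 2))) @ \oo --> 0.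
    have h := cvgM (cvg_cst ((d / 2)^-2)) (cvgD kcv rcv).
    rewrite addr0 mulr0 in h; exact: h.
  apply: (squeeze_cvgr _ (cvg_cst 0) bnd_cv).
  apply: filterS (@cvgr_dist_lt _ _ _ _ _ _ _ qcv _ d2) => n hn.
  rewrite (mark n hn) andbT; apply: sumr_ge0 => v _; exact: mu_ge0.
have sumcv : (fun n => \sum_(x < M) b n x) @ \oo --> 0.
  apply: (sum_cvg0 (u := fun (x : 'I_M) n => b n x)) => x; exact: bcv.
have scv : (fun n => \sum_(v : {ffun 'I_(k n) * 'I_(k n) -> bool} |
              (eps%:E < dTV (gfun v) p)%E) mu P (chi n) v) @ \oo --> 0.
  apply: (squeeze_cvgr _ (cvg_cst 0) sumcv).
  apply: nearW => n; rewrite bad_le andbT.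
  by apply: sumr_ge0 => v _; exact: mu_ge0.
rewrite (_ : (fun n => _) = (fun n => (\sum_(v : {ffun 'I_(k n) * 'I_(k n) -> bool} |
              (eps%:E < dTV (gfun v) p)%E) mu P (chi n) v)%:E)); last first.
  by apply: funext => n; rewrite bad_eq.
apply: cvg_EFin; first exact: nearW.
exact: scv.
Qed.
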